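(* Consider in $d=4$ the classes $\mathcal{C}^{(4)}_1=\{Y\otimes Y, I\otimes Y, Y\otimes I\}$, $\mathcal{C}^{(4)}_2=\{Y\otimes Z, X\otimes X, Z\otimes Y\}$, $\mathcal{C}^{(4)}_3=\{Z\otimes I, I\otimes Z, Z\otimes Z\}$, and in $d=8$ the classes (writing $ABC$ for $A\otimes B\otimes C$) $\mathcal{C}^{(8)}_1=\{IIY,YYI,YYY,IYY,YII,IYI,YIY\}$, $\mathcal{C}^{(8)}_2=\{IXI,XIX,XXX,IXX,IIX,XII,XXI\}$, $\mathcal{C}^{(8)}_3=\{ZII,IZZ,ZZZ,IIZ,IZI,ZIZ,ZZI\}$, $\mathcal{C}^{(8)}_4=\{IZX,YZI,YIX,ZYY,XYZ,ZXZ,XXY\}$, $\mathcal{C}^{(8)}_5=\{XIZ,XYI,IYZ,ZXX,YZX,YXY,ZZY\}$. The common eigenbases of $\mathcal{C}^{(4)}_1,\mathcal{C}^{(4)}_2,\mathcal{C}^{(4)}_3$ form a strongly unextendible set of three mutually unbiased bases of $\mathbb{C}^4$, and the common eigenbases of $\mathcal{C}^{(8)}_1,\dots,\mathcal{C}^{(8)}_5$ form a strongly unextendible set of five mutually unbiased bases of $\mathbb{C}^8$; that is, in each case there is no vector $v\in\mathbb{C}^d$ with $|\langle v|b\rangle|^2=\|v\|^2/d$ for every vector $b$ of every one of the bases.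
   Context: $X,Y,Z$ are the standard single-qubit Pauli matrices and $I$ the $2\times 2$ identity. Each listed class consists of mutually commuting operators, and its common eigenbasis (the joint eigenbasis of the operators in the class) is an orthonormal basis of $\mathbb{C}^d$. Two orthonormal bases of $\mathbb{C}^d$ are mutually unbiased if $|\langle a|b\rangle|=1/\sqrt d$ for all vectors $a$ of the first and $b$ of the second. A set of mutually unbiased bases is strongly unextendible if there is no vector in $\mathbb{C}^d$ unbiased with respect to all of the bases. *)

(* Defs.v *)
(* Complex scalars: an arbitrary numClosedFieldType C
   (e.g. the complex numbers R[i] over any real closed field, incl. C = complex R). *)
From HB Require Import structures.
From mathcomp Require Import all_boot all_order all_algebra.
From mathcomp.real_closed Require Import mxtens.
Set Implicit Arguments. Unset Strict Implicit. Unset Printing Implicit Defensive.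
Import Order.TTheory GRing.Theory Num.Theory.
Local Open Scope ring_scope.

Section Pauli.
Variable C : numClosedFieldType.

(* Pauli matrices (row index first): X = [[0,1],[1,0]], Y = [[0,-i],[i,0]],
   Z = [[1,0],[0,-1]]. *)
Definition pI : 'M[C]_2 := 1%:M.
Definition pX : 'M[C]_2 := \matrix_(i, j) (if i == j then 0 else 1).
Definition pY : 'M[C]_2 :=
  \matrix_(i, j) (if i == j then 0 else if (i : nat) == 0%N then - 'i else 'i).
Definition pZ : 'M[C]_2 :=
  \matrix_(i, j) (if i == j then (if (i : nat) == 0%N then 1 else -1) else 0).

Definition t2 (A B : 'M[C]_2) : 'M[C]_4 := A *t B.
Definition t3 (A B D : 'M[C]_2) : 'M[C]_8 := (A *t B) *t D.

Definition dotC (d : nat) (u v : 'cV[C]_d) : C := \sum_(i < d) (u i 0)^* * v i 0.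

Definition orthonormal_basis (d : nat) (b : 'I_d -> 'cV[C]_d) : Prop :=
  forall i j, dotC (b i) (b j) = (i == j)%:R.

Definition common_eigenbasis (d : nat) (cls : seq 'M[C]_d) (b : 'I_d -> 'cV[C]_d) : Prop :=
  orthonormal_basis b /\
  forall i, forall M, M \in cls -> exists lam : C, M *m b i = lam *: b i.

(* |<a|b>| = 1/sqrt d, written squared *)
Definition mutually_unbiased (d : nat) (b1 b2 : 'I_d -> 'cV[C]_d) : Prop :=
  forall i j, `|dotC (b1 i) (b2 j)| ^+ 2 = d%:R^-1.

Definition MUB_set (n d : nat) (B : 'I_n -> 'I_d -> 'cV[C]_d) : Prop :=
  forall k l, k != l -> mutually_unbiased (B k) (B l).

Definition strongly_unextendible (n d : nat) (B : 'I_n -> 'I_d -> 'cV[C]_d) : Prop :=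
  forall v : 'cV[C]_d,
    (forall k i, `|dotC v (B k i)| ^+ 2 = dotC v v / d%:R) -> v = 0.

Definition C4_1 : seq 'M[C]_4 := [:: t2 pY pY; t2 pI pY; t2 pY pI].
Definition C4_2 : seq 'M[C]_4 := [:: t2 pY pZ; t2 pX pX; t2 pZ pY].
Definition C4_3 : seq 'M[C]_4 := [:: t2 pZ pI; t2 pI pZ; t2 pZ pZ].
Definition cls4 (k : 'I_3) : seq 'M[C]_4 := nth [::] [:: C4_1; C4_2; C4_3] k.

Definition C8_1 : seq 'M[C]_8 :=
  [:: t3 pI pI pY; t3 pY pY pI; t3 pY pY pY; t3 pI pY pY; t3 pY pI pI; t3 pI pY pI; t3 pY pI pY].
Definition C8_2 : seq 'M[C]_8 :=
  [:: t3 pI pX pI; t3 pX pI pX; t3 pX pX pX; t3 pI pX pX; t3 pI pI pX; t3 pX pI pI; t3 pX pX pI].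
Definition C8_3 : seq 'M[C]_8 :=
  [:: t3 pZ pI pI; t3 pI pZ pZ; t3 pZ pZ pZ; t3 pI pI pZ; t3 pI pZ pI; t3 pZ pI pZ; t3 pZ pZ pI].
Definition C8_4 : seq 'M[C]_8 :=
  [:: t3 pI pZ pX; t3 pY pZ pI; t3 pY pI pX; t3 pZ pY pY; t3 pX pY pZ; t3 pZ pX pZ; t3 pX pX pY].
Definition C8_5 : seq 'M[C]_8 :=
  [:: t3 pX pI pZ; t3 pX pY pI; t3 pI pY pZ; t3 pZ pX pX; t3 pY pZ pX; t3 pY pX pY; t3 pZ pZ pY].
Definition cls8 (k : 'I_5) : seq 'M[C]_8 := nth [::] [:: C8_1; C8_2; C8_3; C8_4; C8_5] k.

End Pauli.

(* Main.v *)
Set Warnings "-all".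
From Stdlib Require Import NsatzTactic Lia.
Require Import Defs.
From HB Require Import structures.
From mathcomp Require Import all_boot all_order all_algebra.
From mathcomp.real_closed Require Import mxtens.
From mathcomp Require Import ring.
Import Order.TTheory GRing.Theory Num.Theory.
Local Open Scope ring_scope.
Set Implicit Arguments. Unset Strict Implicit. Unset Printing Implicit Defensive.

Section Gen.
Variable C : numClosedFieldType.

#[local] Instance Cops : @Ncring.Ring_ops C 0 1 (@GRing.add C) (@GRing.mul C) (fun x y => x - y) (@GRing.opp C) (@eq C) := {}.

#[local] Instance Cri : (Ncring.Ring (Ro:=Cops)).
Proof.
constructor=> //.
- exact: eq_equivalence.
- by move=> x y -> z w ->.
- by move=> x y -> z w ->.
- by move=> x y -> z w ->.
- by move=> x y ->.
- exact: add0r.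
- exact: addrC.
- exact: addrA.
- exact: mul1r.
- exact: mulr1.
- exact: mulrA.
- exact: mulrDl.
- move=> x y z; rewrite /equality /multiplication /addition /=; exact: mulrDr.
- exact: subrr.
Defined.

#[local] Instance Ccri : (Cring.Cring (Rr:=Cri)).
Proof. exact: mulrC. Defined.

#[local] Instance Cdi : (Integral_domain.Integral_domain (Rcr:=Ccri)).
Proof.
constructor.
- by move=> x y /eqP; rewrite mulf_eq0 => /orP[/eqP->|/eqP->]; [left|right].
- exact/eqP/oner_neq0.
Defined.

Lemma phiPOS_nat (p : positive) : (NsatzTactic.IPR p : C) = (Pos.to_nat p)%:R.
Proof.
elim: p => [q IH|q IH|].
- rewrite Pos2Nat.inj_xI -[(2 * _)%coq_nat]/(2 * _)%N -addn1 natrD natrM addrC -IH.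
  case: q {IH} => [q|q|] /=; rewrite /Algebra_syntax.one /Algebra_syntax.addition /Algebra_syntax.multiplication /Ncring.one_notation /Ncring.add_notation /Ncring.mul_notation /NsatzTactic.R2 /=;
  by rewrite -(mulr2n 1) ?mulr1 // addrC.
- rewrite Pos2Nat.inj_xO -[(2 * _)%coq_nat]/(2 * _)%N natrM -IH.
  case: q {IH} => [q|q|] /=; rewrite /Algebra_syntax.one /Algebra_syntax.addition /Algebra_syntax.multiplication /Ncring.one_notation /Ncring.add_notation /Ncring.mul_notation /NsatzTactic.R2 /=;
  by rewrite -(mulr2n 1) ?mulr1.
- by [].
Qed.

Lemma interp_c (c : positive) fv : (NsatzTactic.interpret3 (Ring_polynom.PEc (Zpos c)) fv : C) = (Pos.to_nat c)%:R.
Proof. by rewrite /= phiPOS_nat. Qed.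

Lemma discr_c (c : positive) fv : ~ (NsatzTactic.interpret3 (Ring_polynom.PEc (Zpos c)) fv = 0 :> C).
Proof. rewrite interp_c. have : (Pos.to_nat c)%:R != 0 :> C. rewrite pnatr_eq0. apply/eqP. have := Pos2Nat.is_pos c. lia. by move=> /eqP. Qed.

Ltac nsatzC := nsatz; try (exact: discr_c).

Lemma sqi : 'i * 'i = -1 :> C.
Proof. by rewrite -expr2 sqrCi. Qed.

Definition adjm m n (M : 'M[C]_(m,n)) : 'M[C]_(n,m) := (map_mx (fun x : C => x^*) M)^T.

Lemma dotCE d (u v : 'cV[C]_d) : dotC u v = (adjm u *m v) 0 0.
Proof. by rewrite /dotC !mxE; apply: eq_bigr => k _; rewrite !mxE. Qed.

Lemma adjmK m n (M : 'M[C]_(m,n)) : adjm (adjm M) = M.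
Proof. by apply/matrixP => i j; rewrite !mxE /= conjCK. Qed.

Lemma adjmM m n p (A : 'M[C]_(m,n)) (B : 'M[C]_(n,p)) : adjm (A *m B) = adjm B *m adjm A.
Proof.
apply/matrixP => i j; rewrite !mxE rmorph_sum; apply: eq_bigr => k _.
by rewrite !mxE rmorphM mulrC.
Qed.

Lemma dotC_adj d (u v : 'cV[C]_d) M : dotC u (M *m v) = dotC (adjm M *m u) v.
Proof. by rewrite !dotCE adjmM adjmK mulmxA. Qed.

Lemma dotC_conj d (u v : 'cV[C]_d) : dotC v u = (dotC u v)^*.
Proof.
rewrite /dotC rmorph_sum; apply: eq_bigr => k _; by rewrite rmorphM /= conjCK mulrC.
Qed.

Lemma dotCZr d (u v : 'cV[C]_d) a : dotC u (a *: v) = a * dotC u v.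
Proof. rewrite /dotC mulr_sumr; apply: eq_bigr => k _; rewrite mxE; ring. Qed.

Lemma dotCZl d (u v : 'cV[C]_d) a : dotC (a *: u) v = a^* * dotC u v.
Proof. rewrite /dotC mulr_sumr; apply: eq_bigr => k _; rewrite mxE rmorphM; ring. Qed.

Lemma dotC_sumr d (u : 'cV[C]_d) I (r : seq I) (P : pred I) (F : I -> 'cV[C]_d) :
  dotC u (\sum_(i <- r | P i) F i) = \sum_(i <- r | P i) dotC u (F i).
Proof.
rewrite /dotC exchange_big /=; apply: eq_bigr => k _.
rewrite summxE mulr_sumr; by [].
Qed.

Lemma dotC_ge0 d (v : 'cV[C]_d) : dotC v v = 0 -> v = 0.
Proof.
rewrite /dotC => H.
have H2 : forall k, k \in 'I_d -> true -> (v k 0)^* * v k 0 = 0.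
  move=> k _ _; apply: (psumr_eq0P _ H) => // j _.
  by rewrite mulrC -normCK exprn_ge0.
apply/matrixP => i j; rewrite [j]ord1 mxE.
have := H2 i isT isT; rewrite mulrC -normCK => /eqP; rewrite expf_eq0 /= normr_eq0.
by move/eqP.
Qed.

Section Basis.
Variable d : nat.
Variable b : 'I_d -> 'cV[C]_d.
Hypothesis ob : orthonormal_basis b.

Definition Bm : 'M[C]_d := \matrix_(k, i) b i k 0.

Lemma Bm_unitary : adjm Bm *m Bm = 1%:M.
Proof.
apply/matrixP => i j; rewrite !mxE -ob /dotC; apply: eq_bigr => k _; by rewrite !mxE.
Qed.

Lemma Bm_unitary' : Bm *m adjm Bm = 1%:M.
Proof. exact: mulmx1C Bm_unitary. Qed.

Lemma complete (v : 'cV[C]_d) : v = \sum_i dotC (b i) v *: b i.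
Proof.
have E : v = Bm *m (adjm Bm *m v) by rewrite mulmxA Bm_unitary' mul1mx.
rewrite {1}E.
apply/matrixP => k j; rewrite [j]ord1 summxE !mxE; apply: eq_bigr => i _.
rewrite !mxE dotCE mulrC; congr (_ * _); rewrite !mxE; apply: eq_bigr => l _; by rewrite !mxE.
Qed.

Lemma qform (M : 'M[C]_d) lam (v : 'cV[C]_d) :
  (forall i, M *m b i = lam i *: b i) ->
  dotC v (M *m v) = \sum_i lam i * `|dotC (b i) v| ^+ 2.
Proof.
move=> Hl.
rewrite {2}(complete v) mulmx_sumr dotC_sumr; apply: eq_bigr => i _.
rewrite -scalemxAr Hl scalerA dotCZr (dotC_conj (b i) v) normCK; ring.
Qed.

Lemma trace_basis (M : 'M[C]_d) : \tr M = \sum_i dotC (b i) (M *m b i).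
Proof.
rewrite -{1}[M]mulmx1 -Bm_unitary' mulmxA mxtrace_mulC mulmxA -mulmxA.
rewrite /mxtrace; apply: eq_bigr => i _.
rewrite /dotC !mxE; apply: eq_bigr => k _; rewrite !mxE; congr (_ * _).
by apply: eq_bigr => l _; rewrite !mxE.
Qed.

Lemma dotC_self i : dotC (b i) (b i) = 1.
Proof. by rewrite ob eqxx. Qed.
End Basis.

Section Class.
Variable n : nat.
Local Notation d := n.+1.
Variable cls : seq 'M[C]_d.
Hypothesis Hsize : size cls = n.
Definition G k := nth 1%:M (1%:M :: cls) k.
Hypothesis Htr : forall k l : 'I_d, \tr (G k *m G l) = (k == l)%:R * d%:R.
Variable b : 'I_d -> 'cV[C]_d.
Hypothesis ceb : common_eigenbasis cls b.

Definition lam (k : 'I_d) i := dotC (b i) (G k *m b i).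

Lemma G_in (k : 'I_d) : k != ord0 -> G k \in cls.
Proof.
case: k => [[|k] Hk] //= _; apply: mem_nth; rewrite Hsize; by [].
Qed.

Lemma in_G g : g \in cls -> exists2 k : 'I_d, k != ord0 & g = G k.
Proof.
move=> Hg; have Hi : ((index g cls).+1 < d)%N by rewrite ltnS; move: (Hg); rewrite -index_mem Hsize.
exists (Ordinal Hi) => //; by rewrite /G /= nth_index.
Qed.

Lemma eigG (k : 'I_d) i : G k *m b i = lam k i *: b i.
Proof.
have [-> | Hk] := eqVneq k ord0.
  by rewrite /lam /G /= mul1mx (dotC_self ceb.1) scale1r.
have [l Hl] := ceb.2 i _ (G_in Hk).
by rewrite /lam Hl dotCZr (dotC_self ceb.1) mulr1.
Qed.

Lemma lam0 i : lam ord0 i = 1.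
Proof. by rewrite /lam /G /= mul1mx (dotC_self ceb.1). Qed.

Lemma rowo (k l : 'I_d) : \sum_i lam k i * lam l i = (k == l)%:R * d%:R.
Proof.
rewrite -Htr (trace_basis ceb.1); apply: eq_bigr => i _.
by rewrite -mulmxA eigG -scalemxAr eigG scalerA dotCZr (dotC_self ceb.1) mulr1 mulrC.
Qed.

Definition Lam : 'M[C]_d := \matrix_(k, i) lam k i.

Lemma d_neq0 : (d%:R : C) != 0.
Proof. by rewrite pnatr_eq0. Qed.

Lemma colo (i j : 'I_d) : \sum_k lam k i * lam k j = (i == j)%:R * d%:R.
Proof.
have H1 : Lam *m (d%:R^-1 *: Lam^T) = 1%:M.
  apply/matrixP => k l; rewrite -scalemxAr !mxE.
  rewrite (eq_bigr (fun i => lam k i * lam l i)); last by move=> x _; rewrite !mxE.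
  rewrite rowo mulrCA mulVf ?d_neq0 // mulr1; by case: (k == l).
have H2 := mulmx1C H1.
have := congr1 (fun M : 'M[C]_d => M i j) H2.
rewrite -scalemxAl !mxE => H3.
have H4 : \sum_k lam k i * lam k j = d%:R * (d%:R^-1 * \sum_k Lam^T i k * Lam k j).
  rewrite mulrA mulfV ?d_neq0 // mul1r; apply: eq_bigr => k _; by rewrite !mxE.
rewrite H4 H3 mulrC; by [].
Qed.

Lemma qG (k : 'I_d) v : dotC v (G k *m v) = \sum_i lam k i * `|dotC (b i) v| ^+ 2.
Proof. apply: (qform ceb.1); exact: eigG. Qed.

Lemma pform v i : d%:R * `|dotC (b i) v| ^+ 2 = \sum_k lam k i * dotC v (G k *m v).
Proof.
under eq_bigr => k _ do rewrite qG mulr_sumr.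
rewrite exchange_big /=.
under eq_bigr => j _ do under eq_bigr => k _ do rewrite mulrA.
under eq_bigr => j _ do rewrite -mulr_suml colo.
rewrite (bigD1 i) //= eqxx big1 ?addr0 ?mul1r //.
move=> j Hj; rewrite eq_sym (negbTE Hj) !mul0r; by [].
Qed.

Lemma unext_step v : (forall i, `|dotC v (b i)| ^+ 2 = dotC v v / d%:R) ->
  forall g, g \in cls -> dotC v (g *m v) = 0.
Proof.
move=> H g /in_G [k Hk ->].
rewrite qG (eq_bigr (fun i => lam k i * lam ord0 i * (dotC v v / d%:R))); last first.
  by move=> i _; rewrite lam0 mulr1 (dotC_conj v (b i)) norm_conjC H.
rewrite -mulr_suml rowo (negbTE Hk) !mul0r; by [].
Qed.

Lemma mub_step c : dotC c c = 1 -> (forall g, g \in cls -> dotC c (g *m c) = 0) ->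
  forall i, `|dotC (b i) c| ^+ 2 = d%:R^-1.
Proof.
move=> Hc H i.
have := pform c i; rewrite (bigD1 ord0) //= big1 ?addr0.
  rewrite lam0 /G /= mul1mx Hc mulr1 => E.
  by apply: (mulfI d_neq0); rewrite E mulfV ?d_neq0.
move=> k Hk; rewrite (H _ (G_in Hk)) mulr0; by [].
Qed.
End Class.

Lemma anti_zero d (g h : 'M[C]_d) (c : 'cV[C]_d) mu :
  g *m h = - (h *m g) -> adjm h = h -> h *m h = 1%:M -> h *m c = mu *: c ->
  dotC c c = 1 -> dotC c (g *m c) = 0.
Proof.
move=> Hgh Hh Hhh Hc Hcc.
have Emu : mu = dotC c (h *m c) by rewrite Hc dotCZr Hcc mulr1.
have Hreal : mu^* = mu.
  by rewrite Emu -dotC_conj -{1}Hh -dotC_adj.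
have Hmu2 : mu * mu = 1.
  have := congr1 (fun M => dotC c (M *m c)) Hhh.
  by rewrite /= mul1mx Hcc -mulmxA Hc -scalemxAr Hc scalerA dotCZr Hcc mulr1.
have dotCN : forall u w : 'cV[C]_d, dotC u (- w) = - dotC u w.
  by move=> u w; rewrite -scaleN1r dotCZr mulN1r.
have E1 : mu * dotC c (g *m c) = - (mu * dotC c (g *m c)).
  rewrite -[LHS]dotCZr scalemxAr -Hc mulmxA Hgh mulNmx -mulmxA dotCN (dotC_adj c (g *m c) h) Hh Hc dotCZl Hreal; by [].
have H2 : (mu * dotC c (g *m c)) *+ 2 = 0 by rewrite mulr2n {1}E1 addNr.
move/eqP: H2; rewrite mulrn_eq0 /= => /eqP H3.
by rewrite -[dotC c _]mul1r -Hmu2 -mulrA H3 mulr0.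
Qed.

Theorem family (n m : nat) (cls : 'I_m -> seq 'M[C]_(n.+1)) :
  (forall c, size (cls c) = n) ->
  (forall c (k l : 'I_n.+1), \tr (G (cls c) k *m G (cls c) l) = (k == l)%:R * n.+1%:R) ->
  (forall c c', c != c' -> forall g, g \in cls c -> exists h,
      [/\ h \in cls c', g *m h = - (h *m g), adjm h = h & h *m h = 1%:M]) ->
  (forall v : 'cV[C]_n.+1, (forall c g, g \in cls c -> dotC v (g *m v) = 0) -> dotC v v = 0) ->
  forall B, (forall c, common_eigenbasis (cls c) (B c)) -> MUB_set B /\ strongly_unextendible B.
Proof.
move=> Hs Htr Hanti Hun B HB; split.
  move=> k l Hkl i j.
  apply: (mub_step (Hs k) (Htr k) (HB k)).
    exact: (dotC_self (HB l).1).
  move=> g Hg; have [h [Hh Hgh Hadj Hhh]] := Hanti _ _ Hkl _ Hg.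
  have [mu Hmu] := (HB l).2 j h Hh.
  exact: (anti_zero Hgh Hadj Hhh Hmu (dotC_self (HB l).1 j)).
move=> v Hv; apply: dotC_ge0; apply: Hun => c g Hg.
exact: (unext_step (Hs c) (Htr c) (HB c) (Hv c) Hg).
Qed.

Definition gi := (int * int)%type.
Definition g0 : gi := (Posz 0, Posz 0).
Definition g1 : gi := (Posz 1, Posz 0).
Definition gm1 : gi := (Negz 0, Posz 0).
Definition gpi : gi := (Posz 0, Posz 1).
Definition gmi : gi := (Posz 0, Negz 0).
Definition gadd (a b : gi) : gi := (a.1 + b.1, a.2 + b.2)%R.
Definition gmul (a b : gi) : gi := (a.1 * b.1 - a.2 * b.2, a.1 * b.2 + a.2 * b.1)%R.
Definition gopp (a : gi) : gi := (- a.1, - a.2)%R.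
Definition gconj (a : gi) : gi := (a.1, - a.2)%R.
Definition emb (a : gi) : C := a.1%:~R + a.2%:~R * 'i.

Lemma emb0 : emb g0 = 0. Proof. by rewrite /emb /= mul0r addr0. Qed.
Lemma emb1 : emb g1 = 1. Proof. by rewrite /emb /= mul0r addr0. Qed.
Lemma embm1 : emb gm1 = -1. Proof. by rewrite /emb /= mul0r addr0. Qed.
Lemma embi : emb gpi = 'i. Proof. by rewrite /emb /= mul1r add0r. Qed.
Lemma embmi : emb gmi = - 'i. Proof. by rewrite /emb /= mulN1r add0r. Qed.

Lemma emb_add a b : emb (gadd a b) = emb a + emb b.
Proof. rewrite /emb /= !intrD; ring. Qed.

Lemma emb_mul a b : emb (gmul a b) = emb a * emb b.
Proof.
rewrite /emb /= intrB intrD !intrM.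
have Hi := sqi.
set x1 := (a.1)%:~R; set x2 := (a.2)%:~R; set y1 := (b.1)%:~R; set y2 := (b.2)%:~R.
rewrite (_ : (x1 + x2 * 'i) * (y1 + y2 * 'i) = x1 * y1 + x2 * y2 * ('i * 'i) + (x1 * y2 + x2 * y1) * 'i); last by ring.
rewrite Hi; ring.
Qed.

Lemma emb_opp a : emb (gopp a) = - emb a.
Proof. rewrite /emb /= !intrN; ring. Qed.

Lemma emb_conj a : (emb a)^* = emb (gconj a).
Proof. by rewrite /emb /= rmorphD rmorphM /= !rmorph_int conjCi intrN mulrN mulNr. Qed.

Definition gsum (s : seq gi) : gi := foldr gadd g0 s.
Lemma emb_gsum s : emb (gsum s) = \sum_(x <- s) emb x.
Proof. elim: s => [|x s IH] /=; first by rewrite big_nil emb0. by rewrite big_cons emb_add IH. Qed.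

Definition smat := nat -> nat -> gi.
Definition embM m n (A : smat) : 'M[C]_(m,n) := \matrix_(i, j) emb (A i j).
Definition smul n (A B : smat) : smat := fun i j => gsum [seq gmul (A i k) (B k j) | k <- iota 0 n].

Lemma sum_iota n (F : nat -> C) : \sum_(k < n) F k = \sum_(k <- iota 0 n) F k.
Proof. by rewrite -(big_mkord xpredT) /index_iota subn0. Qed.

Lemma embM_mul m n p A B : embM m n A *m embM n p B = embM m p (smul n A B).
Proof.
apply/matrixP => i j; rewrite !mxE emb_gsum big_map -sum_iota.
by apply: eq_bigr => k _; rewrite !mxE emb_mul.
Qed.

Definition stens p q (A B : smat) : smat :=
  fun i j => gmul (A (i %/ p)%N (j %/ q)%N) (B (i %% p)%N (j %% q)%N).

Lemma embM_tens m n p q A B : embM m n A *t embM p q B = embM (m * p) (n * q) (stens p q A B).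
Proof. by apply/matrixP => i j; rewrite !mxE emb_mul. Qed.

Definition sadj (A : smat) : smat := fun i j => gconj (A j i).
Lemma embM_adj m n A : adjm (embM m n A) = embM n m (sadj A).
Proof. by apply/matrixP => i j; rewrite !mxE /= emb_conj. Qed.

Definition strace n (A : smat) : gi := gsum [seq A i i | i <- iota 0 n].
Lemma embM_tr n A : \tr (embM n n A) = emb (strace n A).
Proof. rewrite emb_gsum big_map -sum_iota /mxtrace; apply: eq_bigr => i _; by rewrite mxE. Qed.

Definition smeq m n (A B : smat) :=
  all (fun i => all (fun j => A i j == B i j) (iota 0 n)) (iota 0 m).
Lemma smeqP m n A B : smeq m n A B -> embM m n A = embM m n B.
Proof.
move=> H; apply/matrixP => i j; rewrite !mxE.
move/seq.allP: H => /(_ i); rewrite mem_iota /= add0n ltn_ord => /(_ isT) /allP /(_ j).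
by rewrite mem_iota /= add0n ltn_ord => /(_ isT) /eqP ->.
Qed.

Definition sid : smat := fun i j => if i == j then g1 else g0.
Lemma embM_id n : embM n n sid = 1%:M.
Proof.
apply/matrixP => i j; rewrite !mxE /sid /=.
have -> : ((i : nat) == j) = (i == j) by [].
by case: (i == j); rewrite ?emb1 ?emb0.
Qed.

Definition sX : smat := fun i j => if i == j then g0 else g1.
Definition sY : smat := fun i j => if i == j then g0 else if i == 0%N then gmi else gpi.
Definition sZ : smat := fun i j => if i == j then (if i == 0%N then g1 else gm1) else g0.

Lemma pIE : pI C = embM 2 2 sid. Proof. by rewrite embM_id. Qed.
Lemma pXE : pX C = embM 2 2 sX.
Proof. apply/matrixP => i j; rewrite !mxE /sX /=; have -> : ((i : nat) == j) = (i == j) by []. case: (i == j); by rewrite ?emb0 ?emb1. Qed.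
Lemma pYE : pY C = embM 2 2 sY.
Proof. apply/matrixP => i j; rewrite !mxE /sY /=; have -> : ((i : nat) == j) = (i == j) by []. case: (i == j); rewrite ?emb0 //; case: (_ == _); by rewrite ?embi ?embmi. Qed.
Lemma pZE : pZ C = embM 2 2 sZ.
Proof. apply/matrixP => i j; rewrite !mxE /sZ /=; have -> : ((i : nat) == j) = (i == j) by []. case: (i == j); rewrite ?emb0 //; case: (_ == _); by rewrite ?emb1 ?embm1. Qed.

Definition sp (a : nat) : smat := match a with 0 => sid | 1 => sX | 2 => sY | _ => sZ end.
Definition s2 (t : nat * nat) : smat := stens 2 2 (sp t.1) (sp t.2).
Definition s3 (t : nat * nat * nat) : smat := stens 2 2 (stens 2 2 (sp t.1.1) (sp t.1.2)) (sp t.2).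

Lemma t2E A B : t2 (embM 2 2 A) (embM 2 2 B) = embM 4 4 (stens 2 2 A B).
Proof. by rewrite /t2 embM_tens. Qed.
Lemma t3E A B D : t3 (embM 2 2 A) (embM 2 2 B) (embM 2 2 D) = embM 8 8 (stens 2 2 (stens 2 2 A B) D).
Proof. by rewrite /t3 !embM_tens. Qed.

Definition L4 : seq (seq (nat * nat)) :=
  [:: [:: (2,2); (0,2); (2,0)]; [:: (2,3); (1,1); (3,2)]; [:: (3,0); (0,3); (3,3)]].
Definition L8 : seq (seq (nat * nat * nat)) :=
  [:: [:: (0,0,2); (2,2,0); (2,2,2); (0,2,2); (2,0,0); (0,2,0); (2,0,2)];
      [:: (0,1,0); (1,0,1); (1,1,1); (0,1,1); (0,0,1); (1,0,0); (1,1,0)];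
      [:: (3,0,0); (0,3,3); (3,3,3); (0,0,3); (0,3,0); (3,0,3); (3,3,0)];
      [:: (0,3,1); (2,3,0); (2,0,1); (3,2,2); (1,2,3); (3,1,3); (1,1,2)];
      [:: (1,0,3); (1,2,0); (0,2,3); (3,1,1); (2,3,1); (2,1,2); (3,3,2)]].
Definition scls4 (k : nat) : seq smat := map s2 (nth [::] L4 k).
Definition scls8 (k : nat) : seq smat := map s3 (nth [::] L8 k).

Lemma cls4E (k : 'I_3) : cls4 C k = map (embM 4 4) (scls4 k).
Proof.
rewrite /cls4 /C4_1 /C4_2 /C4_3 ?pIE ?pXE ?pYE ?pZE !t2E.
by case: k => [[|[|[|//]]] Hk].
Qed.

Lemma cls8E (k : 'I_5) : cls8 C k = map (embM 8 8) (scls8 k).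
Proof.
rewrite /cls8 /C8_1 /C8_2 /C8_3 /C8_4 /C8_5 ?pIE ?pXE ?pYE ?pZE !t3E.
by case: k => [[|[|[|[|[|//]]]]] Hk].
Qed.

Lemma nth_map_any (T U : Type) (f : T -> U) x s k : nth (f x) (map f s) k = f (nth x s k).
Proof. by elim: s k => [|y s IH] [|k] //=. Qed.

Lemma mem_map_nth (T : Type) (U : eqType) (f : T -> U) x0 s y :
  y \in map f s -> exists2 k, (k < size s)%N & y = f (nth x0 s k).
Proof.
elim: s => [|x s IH] //=; rewrite in_cons => /orP [/eqP ->|/IH [k Hk ->]].
  by exists 0%N.
by exists k.+1.
Qed.

Lemma embM_opp m n A : embM m n (fun i j => gopp (A i j)) = - embM m n A.
Proof. by apply/matrixP => i j; rewrite !mxE emb_opp. Qed.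

Definition sG (s : seq smat) k := nth sid (sid :: s) k.

Lemma G_emb n (s : seq smat) k : G (map (embM n.+1 n.+1) s) k = embM n.+1 n.+1 (sG s k).
Proof. by rewrite /G -(embM_id n.+1) -map_cons nth_map_any. Qed.

Definition chk_tr d m (scls : nat -> seq smat) :=
  all (fun c => all (fun k => all (fun l =>
     strace d (smul d (sG (scls c) k) (sG (scls c) l)) == (if k == l then (Posz d, Posz 0) else g0))
     (iota 0 d)) (iota 0 d)) (iota 0 m).

Definition chk_anti d m (scls : nat -> seq smat) :=
  all (fun c => all (fun c' => (c != c') ==> all (fun g => has (fun h =>
     [&& smeq d d (smul d g h) (fun i j => gopp (smul d h g i j)),
         smeq d d (sadj h) h & smeq d d (smul d h h) sid]) (scls c')) (scls c))
     (iota 0 m)) (iota 0 m).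

Definition nzl d (A : smat) : seq (nat * nat * gi) :=
  [seq t <- flatten [seq [seq (i, j, A i j) | j <- iota 0 d] | i <- iota 0 d] | t.2 != g0].
Definition qsum (x : nat -> C) (L : seq (nat * nat * gi)) : C :=
  \sum_(t <- L) (x t.1.1)^* * emb t.2 * x t.1.2.

Lemma sum_ord_iota n (F : 'I_n.+1 -> C) : \sum_i F i = \sum_(k <- iota 0 n.+1) F (inord k).
Proof. rewrite -(sum_iota n.+1 (fun k => F (inord k))); apply: eq_bigr => i _; by rewrite inord_val. Qed.

Lemma dotC_nzl n (v : 'cV[C]_n.+1) A :
  dotC v (embM n.+1 n.+1 A *m v) = qsum (fun k => v (inord k) 0) (nzl n.+1 A).
Proof.
rewrite /qsum /nzl big_filter big_mkcond.
rewrite (eq_bigr (fun t => (v (inord t.1.1) 0)^* * emb t.2 * v (inord t.1.2) 0)); last first.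
  by move=> t _; case: ifP => // /negbFE /eqP ->; rewrite emb0 mulr0 mul0r.
rewrite big_flatten big_map /dotC sum_ord_iota.
apply: eq_big_seq => i Hi; rewrite mxE sum_ord_iota mulr_sumr big_map.
apply: eq_big_seq => j Hj; rewrite !mxE /= !inordK ?mulrA //.
  by move: Hj; rewrite mem_iota.
by move: Hi; rewrite mem_iota.
Qed.


Lemma allIota (P : nat -> bool) m k : all P (iota 0 m) -> (k < m)%N -> P k.
Proof. move/seq.allP => H Hk; apply: H; by rewrite mem_iota. Qed.

Lemma family_sym n m (scls : nat -> seq smat) (cls : 'I_m -> seq 'M[C]_n.+1) :
  (forall c : 'I_m, cls c = map (embM n.+1 n.+1) (scls c)) ->
  all (fun c => size (scls c) == n) (iota 0 m) ->
  chk_tr n.+1 m scls -> chk_anti n.+1 m scls ->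
  (forall x : nat -> C, (forall c k, (c < m)%N -> (k < n)%N -> qsum x (nzl n.+1 (nth sid (scls c) k)) = 0) ->
      qsum x (nzl n.+1 sid) = 0) ->
  forall B, (forall c, common_eigenbasis (cls c) (B c)) -> MUB_set B /\ strongly_unextendible B.
Proof.
move=> Hcls Hsz Htr Han Hun; apply: family.
- move=> c; rewrite Hcls size_map.
  exact/eqP/(allIota Hsz (ltn_ord c)).
- move=> c k l; rewrite Hcls !G_emb embM_mul embM_tr.
  have H1 := allIota Htr (ltn_ord c).
  have H2 := allIota H1 (ltn_ord k).
  have /eqP -> := allIota H2 (ltn_ord l).
  have -> : ((k : nat) == l) = (k == l) by [].
  case: (k == l); rewrite ?emb0 ?mul0r // mul1r /emb /= mul0r addr0; by [].
- move=> c c' Hcc' g; rewrite Hcls => /(mem_map_nth sid) [k Hk ->].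
  have H1 := allIota Han (ltn_ord c).
  have := allIota H1 (ltn_ord c').
  have -> : ((c : nat) != c') = (c != c') by [].
  rewrite Hcc' /= => /(all_nthP sid) /(_ k Hk) /(has_nthP sid) [k' Hk' /and3P [E1 E2 E3]].
  exists (embM n.+1 n.+1 (nth sid (scls c') k')); split.
  + by rewrite Hcls -nth_map_any; apply: mem_nth; rewrite size_map.
  + by rewrite !embM_mul (smeqP E1) embM_opp.
  + by rewrite embM_adj (smeqP E2).
  + by rewrite embM_mul (smeqP E3) embM_id.
- move=> v Hv.
  rewrite -[v in dotC _ v]mul1mx -(embM_id n.+1) dotC_nzl.
  apply: Hun => c k Hc Hk.
  rewrite -dotC_nzl (Hv (Ordinal Hc)) // Hcls -nth_map_any; apply: mem_nth.
  rewrite size_map.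
  by rewrite (eqP (allIota Hsz Hc)).
Qed.

Definition chk_eig d m (scls : nat -> seq smat) (W : nat -> smat) :=
  all (fun c => all (fun g => all (fun i => has (fun l =>
      all (fun r => smul d g (W c) r i == gmul l (W c r i)) (iota 0 d)) [:: g1; gm1])
    (iota 0 d)) (scls c)) (iota 0 m).
Definition chk_orth d m (W : nat -> smat) (cw : nat -> gi) :=
  all (fun c => smeq d d (smul d (sadj (W c)) (W c)) (fun i j => if i == j then cw c else g0)) (iota 0 m).

Lemma dotC_col n (M : 'M[C]_n) i j : dotC (col i M) (col j M) = (adjm M *m M) i j.
Proof. rewrite /dotC !mxE; apply: eq_bigr => k _; by rewrite !mxE. Qed.

Lemma colM p q r (A : 'M[C]_(p,q)) (B : 'M[C]_(q,r)) i : col i (A *m B) = A *m col i B.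
Proof. apply/matrixP => x y; rewrite !mxE; apply: eq_bigr => k _; by rewrite !mxE. Qed.

Lemma exist_sym n m (scls : nat -> seq smat) (W : nat -> smat) (cw : nat -> gi) (sc : nat -> C)
  (cls : 'I_m -> seq 'M[C]_n.+1) :
  (forall c : 'I_m, cls c = map (embM n.+1 n.+1) (scls c)) ->
  chk_eig n.+1 m scls W -> chk_orth n.+1 m W cw ->
  (forall c, (sc c)^* * sc c * emb (cw c) = 1) ->
  exists B : 'I_m -> 'I_n.+1 -> 'cV[C]_n.+1, forall c, common_eigenbasis (cls c) (B c).
Proof.
move=> Hcls Heig Hort Hsc.
exists (fun c i => sc c *: col i (embM n.+1 n.+1 (W c))) => c; split.
  move=> i j; rewrite dotCZl dotCZr dotC_col embM_adj embM_mul.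
  rewrite (smeqP (allIota Hort (ltn_ord c))) mxE.
  have -> : ((i : nat) == j) = (i == j) by [].
  case: (i == j); rewrite ?emb0 ?mulr0 //= mulrA; exact: Hsc.
move=> i g; rewrite Hcls => /(mem_map_nth sid) [k Hk ->].
have H1 := allIota Heig (ltn_ord c).
move/(all_nthP sid): H1 => /(_ k Hk) H2.
have := allIota H2 (ltn_ord i) => /(has_nthP g0) [l Hl Hr].
exists (emb (nth g0 [:: g1; gm1] l)).
rewrite -scalemxAr -colM embM_mul scalerA mulrC -scalerA.
congr (_ *: _); apply/matrixP => r z; rewrite [z]ord1 !mxE.
by rewrite (eqP (allIota Hr (ltn_ord r))) emb_mul.
Qed.

Definition mkW (cols : seq (seq gi)) : smat := fun r i => nth g0 (nth [::] cols i) r.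
Definition zW (a : gi) : smat := fun r i => if r == i then a else g0.
Definition W4 (c : nat) : smat :=
  match c with
  | 0 => mkW [:: [:: g1; gpi; gpi; gm1]; [:: g1; gpi; gmi; g1]; [:: g1; gmi; gpi; g1]; [:: g1; gmi; gmi; gm1]]
  | 1 => mkW [:: [:: g1; gpi; gpi; g1]; [:: g1; gpi; gmi; gm1]; [:: g1; gmi; gpi; gm1]; [:: g1; gmi; gmi; g1]]
  | _ => zW (Posz 2, Posz 0)
  end.
Definition W8 (c : nat) : smat :=
  match c with
  | 0 => mkW [:: [:: g1; gpi; gpi; gm1; gpi; gm1; gm1; gmi]; [:: g1; gpi; gpi; gm1; gmi; g1; g1; gpi]; [:: g1; gpi; gmi; g1; gpi; gm1; g1; gpi]; [:: g1; gpi; gmi; g1; gmi; g1; gm1; gmi]; [:: g1; gmi; gpi; g1; gpi; g1; gm1; gpi]; [:: g1; gmi; gpi; g1; gmi; gm1; g1; gmi]; [:: g1; gmi; gmi; gm1; gpi; g1; g1; gmi]; [:: g1; gmi; gmi; gm1; gmi; gm1; gm1; gpi]]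
  | 1 => mkW [:: [:: g1; g1; g1; g1; g1; g1; g1; g1]; [:: g1; g1; g1; g1; gm1; gm1; gm1; gm1]; [:: g1; g1; gm1; gm1; g1; g1; gm1; gm1]; [:: g1; g1; gm1; gm1; gm1; gm1; g1; g1]; [:: g1; gm1; g1; gm1; g1; gm1; g1; gm1]; [:: g1; gm1; g1; gm1; gm1; g1; gm1; g1]; [:: g1; gm1; gm1; g1; g1; gm1; gm1; g1]; [:: g1; gm1; gm1; g1; gm1; g1; g1; gm1]]
  | 3 => mkW [:: [:: g1; g1; g1; gm1; gpi; gpi; gmi; gpi]; [:: g1; g1; g1; gm1; gmi; gmi; gpi; gmi]; [:: g1; g1; gm1; g1; gpi; gpi; gpi; gmi]; [:: g1; g1; gm1; g1; gmi; gmi; gmi; gpi]; [:: g1; gm1; g1; g1; gpi; gmi; gmi; gmi]; [:: g1; gm1; g1; g1; gmi; gpi; gpi; gpi]; [:: g1; gm1; gm1; gm1; gpi; gmi; gpi; gpi]; [:: g1; gm1; gm1; gm1; gmi; gpi; gmi; gmi]]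
  | 4 => mkW [:: [:: g1; gpi; gpi; g1; g1; gmi; gpi; gm1]; [:: g1; gpi; gpi; g1; gm1; gpi; gmi; g1]; [:: g1; gpi; gmi; gm1; g1; gmi; gmi; g1]; [:: g1; gpi; gmi; gm1; gm1; gpi; gpi; gm1]; [:: g1; gmi; gpi; gm1; g1; gpi; gpi; g1]; [:: g1; gmi; gpi; gm1; gm1; gmi; gmi; gm1]; [:: g1; gmi; gmi; g1; g1; gpi; gmi; gm1]; [:: g1; gmi; gmi; g1; gm1; gmi; gpi; g1]]
  | _ => zW (Posz 2, Posz 2)
  end.

Ltac prep H :=
  match type of H with context [qsum ?x ?L] =>
    let L' := eval vm_compute in L in change L with L' in H end;
  rewrite /qsum !big_cons big_nil /= ?emb1 ?embm1 ?embi ?embmi in H.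

Lemma chk4 : [/\ all (fun c => size (scls4 c) == 3) (iota 0 3), chk_tr 4 3 scls4, chk_anti 4 3 scls4,
  chk_eig 4 3 scls4 W4 & chk_orth 4 3 W4 (fun _ => (Posz 4, Posz 0))].
Proof. by vm_compute. Qed.
Lemma chk8 : [/\ all (fun c => size (scls8 c) == 7) (iota 0 5), chk_tr 8 5 scls8, chk_anti 8 5 scls8,
  chk_eig 8 5 scls8 W8 & chk_orth 8 5 W8 (fun _ => (Posz 8, Posz 0))].
Proof. by vm_compute. Qed.

Lemma core4 (x : nat -> C) : (forall c k, (c < 3)%N -> (k < 3)%N -> qsum x (nzl 4 (nth sid (scls4 c) k)) = 0) -> qsum x (nzl 4 sid) = 0.
Proof.
move=> H; apply/eqP; apply: contraT => Hn.
have Ht := mulfV Hn. prep Ht.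
have H0_0 := H 0 0 erefl erefl. prep H0_0.
have H0_1 := H 0 1 erefl erefl. prep H0_1.
have H0_2 := H 0 2 erefl erefl. prep H0_2.
have H1_0 := H 1 0 erefl erefl. prep H1_0.
have H1_1 := H 1 1 erefl erefl. prep H1_1.
have H1_2 := H 1 2 erefl erefl. prep H1_2.
have H2_0 := H 2 0 erefl erefl. prep H2_0.
have H2_1 := H 2 1 erefl erefl. prep H2_1.
have H2_2 := H 2 2 erefl erefl. prep H2_2.
clear H Hn. have Hi := sqi.
have : (1:C) = 0 by nsatzC.
by move/eqP; rewrite oner_eq0.
Qed.

Lemma core8 (x : nat -> C) : (forall c k, (c < 5)%N -> (k < 7)%N -> qsum x (nzl 8 (nth sid (scls8 c) k)) = 0) -> qsum x (nzl 8 sid) = 0.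
Proof.
move=> H; apply/eqP; apply: contraT => Hn.
have Ht := mulfV Hn. prep Ht.
have H0_0 := H 0 0 erefl erefl. prep H0_0.
have H0_1 := H 0 1 erefl erefl. prep H0_1.
have H0_2 := H 0 2 erefl erefl. prep H0_2.
have H0_3 := H 0 3 erefl erefl. prep H0_3.
have H0_4 := H 0 4 erefl erefl. prep H0_4.
have H0_5 := H 0 5 erefl erefl. prep H0_5.
have H0_6 := H 0 6 erefl erefl. prep H0_6.
have H1_0 := H 1 0 erefl erefl. prep H1_0.
have H1_1 := H 1 1 erefl erefl. prep H1_1.
have H1_2 := H 1 2 erefl erefl. prep H1_2.
have H1_3 := H 1 3 erefl erefl. prep H1_3.
have H1_4 := H 1 4 erefl erefl. prep H1_4.
have H1_5 := H 1 5 erefl erefl. prep H1_5.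
have H1_6 := H 1 6 erefl erefl. prep H1_6.
have H2_0 := H 2 0 erefl erefl. prep H2_0.
have H2_1 := H 2 1 erefl erefl. prep H2_1.
have H2_2 := H 2 2 erefl erefl. prep H2_2.
have H2_3 := H 2 3 erefl erefl. prep H2_3.
have H2_4 := H 2 4 erefl erefl. prep H2_4.
have H2_5 := H 2 5 erefl erefl. prep H2_5.
have H2_6 := H 2 6 erefl erefl. prep H2_6.
have H3_0 := H 3 0 erefl erefl. prep H3_0.
have H3_1 := H 3 1 erefl erefl. prep H3_1.
have H3_2 := H 3 2 erefl erefl. prep H3_2.
have H3_3 := H 3 3 erefl erefl. prep H3_3.
have H3_4 := H 3 4 erefl erefl. prep H3_4.
have H3_5 := H 3 5 erefl erefl. prep H3_5.
have H3_6 := H 3 6 erefl erefl. prep H3_6.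
have H4_0 := H 4 0 erefl erefl. prep H4_0.
have H4_1 := H 4 1 erefl erefl. prep H4_1.
have H4_2 := H 4 2 erefl erefl. prep H4_2.
have H4_3 := H 4 3 erefl erefl. prep H4_3.
have H4_4 := H 4 4 erefl erefl. prep H4_4.
have H4_5 := H 4 5 erefl erefl. prep H4_5.
have H4_6 := H 4 6 erefl erefl. prep H4_6.
clear H Hn. have Hi := sqi.
have : (1:C) = 0 by nsatzC.
by move/eqP; rewrite oner_eq0.
Qed.
Lemma sc_ok (a cw : gi) : gmul (gconj a) a = cw -> emb cw != 0 -> ((emb a)^-1)^* * (emb a)^-1 * emb cw = 1.
Proof. move=> Ha Hc. by rewrite fmorphV /= emb_conj -invfM -emb_mul Ha mulVf. Qed.

Lemma emb_nat k : emb (Posz k, Posz 0) = k%:R.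
Proof. by rewrite /emb /= mul0r addr0. Qed.

End Gen.

Theorem mainTheorem8 (C : numClosedFieldType) :
  ((exists B : 'I_3 -> 'I_4 -> 'cV[C]_4, forall k, common_eigenbasis (cls4 C k) (B k)) /\
   (forall B : 'I_3 -> 'I_4 -> 'cV[C]_4,
      (forall k, common_eigenbasis (cls4 C k) (B k)) ->
      MUB_set B /\ strongly_unextendible B)) /\
  ((exists B : 'I_5 -> 'I_8 -> 'cV[C]_8, forall k, common_eigenbasis (cls8 C k) (B k)) /\
   (forall B : 'I_5 -> 'I_8 -> 'cV[C]_8,
      (forall k, common_eigenbasis (cls8 C k) (B k)) ->
      MUB_set B /\ strongly_unextendible B)).
Proof.
have [s4 t4 a4 e4 o4] := chk4.
have [s8 t8 a8 e8 o8] := chk8.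
have sc4 : forall c : nat, ((emb C (Posz 2, Posz 0))^-1)^* * (emb C (Posz 2, Posz 0))^-1 * emb C (Posz 4, Posz 0) = 1.
  move=> c; apply: sc_ok; first by []. by rewrite emb_nat pnatr_eq0.
have sc8 : forall c : nat, ((emb C (Posz 2, Posz 2))^-1)^* * (emb C (Posz 2, Posz 2))^-1 * emb C (Posz 8, Posz 0) = 1.
  move=> c; apply: sc_ok; first by []. by rewrite emb_nat pnatr_eq0.
split; split.
- exact: (@exist_sym C 3 3 scls4 W4 (fun _ => (Posz 4, Posz 0)) (fun _ => (emb C (Posz 2, Posz 0))^-1) (cls4 C) (@cls4E C) e4 o4 sc4).
- exact: (@family_sym C 3 3 scls4 (cls4 C) (@cls4E C) s4 t4 a4 (@core4 C)).
- exact: (@exist_sym C 7 5 scls8 W8 (fun _ => (Posz 8, Posz 0)) (fun _ => (emb C (Posz 2, Posz 2))^-1) (cls8 C) (@cls8E C) e8 o8 sc8).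
- exact: (@family_sym C 7 5 scls8 (cls8 C) (@cls8E C) s8 t8 a8 (@core8 C)).
Qed.
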